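(* Let $\mathcal{F}$ be a $3$-uniform linear set system with maximum matching size $\nu(\mathcal{F})=\nu$ and maximum degree $\Delta(\mathcal{F})=\Delta$. If $\Delta\geq 5$, then $|\mathcal{F}|\leq 2\Delta\nu$.
   Context: A set system $\mathcal{F}$ is a finite collection of distinct subsets of a vertex set $V$. It is $3$-uniform if every member has exactly $3$ elements, and linear if $|A\cap B|\leq 1$ for all distinct $A,B\in\mathcal{F}$. A matching is a collection of pairwise disjoint members of $\mathcal{F}$; $\nu(\mathcal{F})$ is the maximum size of a matching. For a vertex $x$, $\mathcal{F}_x=\{A\in\mathcal{F}: x\in A\}$, and $\Delta(\mathcal{F})=\max_x|\mathcal{F}_x|$. *)

(* Defs.v *)
From mathcomp Require Import all_boot.
Set Implicit Arguments. Unset Strict Implicit. Unset Printing Implicit Defensive.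

Section SetSystems.
Variable V : finType.

Definition uniform3 (F : {set {set V}}) : bool :=
  [forall A in F, #|A| == 3].

Definition linear_sys (F : {set {set V}}) : bool :=
  [forall A in F, forall B in F, (A != B) ==> (#|A :&: B| <= 1)].

Definition is_matching (F M : {set {set V}}) : bool :=
  (M \subset F) &&
  [forall A in M, forall B in M, (A != B) ==> [disjoint A & B]].

Definition nu (F : {set {set V}}) : nat :=
  \max_(M : {set {set V}} | is_matching F M) #|M|.

Definition star (F : {set {set V}}) (x : V) : {set {set V}} :=
  [set A in F | x \in A].

Definition maxdeg (F : {set {set V}}) : nat :=
  \max_(x : V) #|star F x|.
End SetSystems.

(* Main.v *)
Require Import Defs.
From mathcomp Require Import all_boot.
From mathcomp Require Import zify.
Set Implicit Arguments. Unset Strict Implicit. Unset Printing Implicit Defensive.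

Lemma matchingP (V : finType) (F M : {set {set V}}) :
  reflect ((M \subset F) /\ forall A B, A \in M -> B \in M -> A != B -> [disjoint A & B])
    (is_matching F M).
Proof.
apply: (iffP andP) => [[sMF /forall_inP H]|[sMF H]]; split => //.
  by move=> A B AM BM nAB; move: (H A AM) => /forall_inP/(_ B BM)/implyP; apply.
by apply/forall_inP => A AM; apply/forall_inP => B BM; apply/implyP; apply: H.
Qed.

Lemma augment (V : finType) (F M D N : {set {set V}}) :
  is_matching F M -> D \subset M -> N \subset F ->
  (forall B C, B \in N -> C \in N -> B != C -> [disjoint B & C]) ->
  (forall B, B \in N -> B != set0) ->
  (forall B A, B \in N -> A \in M :\: D -> [disjoint A & B]) ->
  #|M| + #|N| <= nu F + #|D|.
Proof.
move=> /matchingP [sMF dM] sDM sNF dN neN dMN.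
have mM' : is_matching F ((M :\: D) :|: N).
  apply/matchingP; split.
    apply/subsetP => A; rewrite !inE => /orP [/andP [_ AM]|AN].
      exact: (subsetP sMF).
    exact: (subsetP sNF).
  move=> A B; rewrite !inE => /orP [/andP [AD AM]|AN] /orP [/andP [BD BM]|BN] nAB.
  - exact: dM.
  - by apply: (dMN B A BN); rewrite inE AD AM.
  - by rewrite disjoint_sym; apply: (dMN A B AN); rewrite inE BD BM.
  - exact: dN.
have le : #|(M :\: D) :|: N| <= nu F := leq_bigmax_cond _ mM'.
have dis : (M :\: D) :&: N = set0.
  apply/setP => B; rewrite !inE; apply/negP => /andP [/andP [BnD BM] BN].
  have := dMN B B BN; rewrite inE BnD BM => /(_ isT).
  rewrite -setI_eq0 setIid => /eqP B0.
  by move: (neN B BN); rewrite B0 eqxx.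
move: le; rewrite cardsU dis cards0 subn0 cardsD (setIidPr sDM) => le.
have hD : #|D| <= #|M| by apply: subset_leq_card.
lia.
Qed.

Lemma card_setP (T : finType) (X : {set T}) (P : pred T) :
  #|[set x in X | P x]| = \sum_(x in X) (P x : nat).
Proof.
rewrite -sum1_card big_mkcond [RHS]big_mkcond /=.
by apply: eq_bigr => x _; rewrite inE; case: (x \in X); case: (P x).
Qed.

Lemma cover_count (T U : finType) (X : {set T}) (Y : {set U}) (R : T -> U -> bool) :
  (forall x, x \in X -> exists2 y, y \in Y & R x y) ->
  #|X| <= \sum_(y in Y) #|[set x in X | R x y]|.
Proof.
move=> H.
rewrite -sum1_card (eq_bigr (fun y => \sum_(x in X) (R x y : nat))); last first.
  by move=> y _; rewrite card_setP.
rewrite exchange_big /=.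
apply: leq_sum => x Xx.
have [y Yy Rxy] := H x Xx.
by rewrite (bigD1 y) //= Rxy.
Qed.

Lemma meetsP (T : finType) (A B : {set T}) :
  reflect (exists2 x, x \in A & x \in B) (~~ [disjoint A & B]).
Proof.
rewrite -setI_eq0; apply: (iffP (set0Pn (A :&: B))) => [[x]|[x xA xB]].
  by rewrite inE => /andP [] ; exists x.
by exists x; rewrite inE xA xB.
Qed.

Lemma setIE' (T : finType) (A B : {set T}) : [set x in A | x \in B] = A :&: B.
Proof. by apply/setP => x; rewrite !inE. Qed.

Lemma six_le (d : nat) : 4 < d -> 3 * 2 <= d + 1.
Proof. lia. Qed.

Theorem theorem1 (V : finType) (F : {set {set V}}) :
  uniform3 F -> linear_sys F -> 5 <= maxdeg F ->
  #|F| <= 2 * maxdeg F * nu F.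
Proof.
move=> /forall_inP u3 lin D5.
set Dl := maxdeg F in D5 *.
have u3' : forall A, A \in F -> #|A| = 3 by move=> A /u3 /eqP.
have lin' : forall A B, A \in F -> B \in F -> A != B -> #|A :&: B| <= 1.
  move=> A B AF BF nAB.
  by move/forall_inP: lin => /(_ A AF)/forall_inP/(_ B BF)/implyP; apply.
have lin2 : forall A B x y, A \in F -> B \in F -> A != B ->
    x \in A -> y \in A -> x \in B -> y \in B -> x = y.
  move=> A B x y AF BF nAB xA yA xB yB.
  have := lin' A B AF BF nAB.
  have sub : [set x; y] \subset A :&: B.
    by apply/subsetP => z; rewrite !inE => /orP [] /eqP ->; rewrite ?xA ?xB ?yA ?yB.
  move=> h; have := leq_trans (subset_leq_card sub) h.
  by rewrite cards2; case: eqP.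
have deg : forall x, #|star F x| <= Dl by move=> x; rewrite /Dl /maxdeg; apply: leq_bigmax.
have m0 : is_matching F set0.
  by apply/matchingP; split; [exact: sub0set | move=> A B; rewrite inE].
have [M mM nuM] : {M | is_matching F M & nu F = #|M|}.
  have h : 0 < #|[pred M0 | is_matching F M0]|.
    by apply/card_gt0P; exists set0.
  have [M mM eqM] := eq_bigmax_cond (fun M0 : {set {set V}} => #|M0|) h.
  by exists M.
have [sMF dM] := matchingP _ _ mM.
have AF : forall A, A \in M -> A \in F by move=> A; apply: (subsetP sMF).
have ne : forall B, B \in F -> B != set0.
  by move=> B BF; apply/negP => /eqP B0; have := u3' B BF; rewrite B0 cards0.
set m := fun B : {set V} => #|[set A in M | ~~ [disjoint A & B]]|.
have cover : forall B, B \in F -> 0 < m B.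
  move=> B BF; rewrite lt0n; apply/negP => /eqP m0B.
  have dis : forall A, A \in M -> [disjoint A & B].
    move=> A AM; apply/negPn/negP => nd.
    have : 0 < m B by apply/card_gt0P; exists A; rewrite inE AM nd.
    by rewrite m0B.
  suff: #|M| + #|[set B]| <= nu F + #|(set0 : {set {set V}})|.
    by rewrite nuM cards0 cards1 addn0 addn1 ltnn.
  apply: augment => //; first by exact: sub0set.
  - by rewrite sub1set.
  - by move=> B1 C1; rewrite !inE => /eqP -> /eqP ->; rewrite eqxx.
  - by move=> B1; rewrite inE => /eqP ->; exact: ne.
  - by move=> B1 A1; rewrite !inE => /eqP -> /andP [_ A1M]; exact: dis.
have perA : forall A, A \in M ->
  \sum_(B in F) (~~[disjoint A & B] + (~~[disjoint A & B] && (m B == 1))) <= 4 * Dl.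
  move=> A AM; have AF' := AF A AM.
  rewrite big_split /= -!card_setP.
  set T := [set B in F | ~~[disjoint A & B] && (m B == 1)].
  have ha : #|[set B in F | ~~ [disjoint A & B]]| + 2 <= 3 * Dl.
    have s1 : \sum_(x in A) #|star F x| <= 3 * Dl.
      apply: (@leq_trans (\sum_(x in A) Dl)); first by apply: leq_sum => x _; exact: deg.
      by rewrite sum_nat_const u3'.
    apply: leq_trans s1.
    have -> : \sum_(x in A) #|star F x| = \sum_(B in F) #|A :&: B|.
      rewrite /star; under eq_bigr do rewrite card_setP.
      rewrite exchange_big /=; apply: eq_bigr => B _.
      by rewrite -setIE' card_setP.
    rewrite card_setP (bigD1 A AF') [X in _ <= X](bigD1 A AF') /= setIid u3' //.
    have -> : ~~ [disjoint A & A] = true.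
      apply/meetsP; have /card_gt0P [x xA] : 0 < #|A| by rewrite u3'.
      by exists x.
    rewrite [true + _]addnC -addnA [3 + _]addnC; apply: leq_add => //.
    apply: leq_sum => B _.
    case: (meetsP A B) => [[x xA xB]|//].
    by apply/card_gt0P; exists x; rewrite inE xA xB.
  have hb : #|T| <= Dl + 2.
    set T' := [set B in F | (B != A) && ~~[disjoint A & B] && (m B == 1)].
    have TT : T \subset A |: T'.
      apply/subsetP => B; rewrite !inE => /andP [BF /andP [mAB mB]].
      by case: eqP => //= _; rewrite BF mAB mB.
    apply: (leq_trans (subset_leq_card TT)); rewrite cardsU1.
    suff hT : #|T'| <= Dl + 1.
      by apply: (leq_trans (leq_add (leq_b1 _) hT)); lia.
    have tF : forall B, B \in T' -> [/\ B \in F, B != A, ~~[disjoint A & B] & m B == 1].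
      by move=> B; rewrite inE => /andP [BF /andP [/andP [nBA mAB] mB]].
    have only : forall B A', B \in T' -> A' \in M -> A' != A -> [disjoint A' & B].
      move=> B A' /tF [BF nBA mAB /cards1P [x hx]] A'M nA'.
      have : A \in [set A0 in M | ~~ [disjoint A0 & B]] by rewrite inE AM mAB.
      rewrite hx inE => /eqP xA.
      apply/negPn/negP => nd.
      have : A' \in [set A0 in M | ~~ [disjoint A0 & B]] by rewrite inE A'M nd.
      by rewrite hx inE -xA (negbTE nA').
    have uv : forall B x y, B \in T' -> x \in A -> y \in A -> x \in B -> y \in B -> x = y.
      move=> B x y /tF [BF nBA _ _] xA yA xB yB.
      by apply: (lin2 A B x y AF' BF _ xA yA xB yB); rewrite eq_sym.
    have cross : forall B C u v, B \in T' -> C \in T' -> u \in A -> v \in A ->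
        u \in B -> v \in C -> u != v -> ~~ [disjoint B & C].
      move=> B C u v BT CT uA vA uB vC nuv; apply/negP => dBC.
      have nBC : B != C.
        apply/negP => /eqP eBC; move: vC; rewrite -eBC => vB.
        by move/eqP: nuv; apply; apply: (uv B).
      have [BF _ _ _] := tF B BT; have [CF _ _ _] := tF C CT.
      suff: #|M| + #|[set B; C]| <= nu F + #|[set A]|.
        by rewrite nuM cards1 cards2 nBC leq_add2l.
      apply: augment => //.
      - by rewrite sub1set.
      - by apply/subsetP => X; rewrite !inE => /orP [] /eqP ->.
      - move=> X Y; rewrite !inE => /orP [] /eqP -> /orP [] /eqP ->; rewrite ?eqxx //.
        by rewrite disjoint_sym.
      - by move=> X; rewrite !inE => /orP [] /eqP -> ; apply: ne.
      - move=> X A'; rewrite !inE => XBC /andP [nA' A'M].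
        by case/orP: XBC => /eqP ->; apply: only.
    case: (boolP [exists B in T', exists C in T', exists u in A, exists v in A,
                  [&& u \in B, v \in C & u != v]]).
    - move=> /exists_inP [B BT /exists_inP [C CT /exists_inP [u uA /exists_inP [v vA /and3P [uB vC nuv]]]]].
      have Pw : forall w, w \in A -> #|[set C0 in T' | w \in C0]| <= 2.
        move=> w wA.
        have [B0 [u0 [B0T u0A u0B nuw]]] :
            exists B0 u0, [/\ B0 \in T', u0 \in A, u0 \in B0 & u0 != w].
          case: (eqVneq u w) => [euw|nuw']; last by exists B, u.
          by exists C, v; split => //; rewrite -euw eq_sym.
        apply: (leq_trans (@cover_count _ _ [set C0 in T' | w \in C0] (B0 :\ u0) (fun (C0 : {set V}) (y : V) => y \in C0) _)).
          move=> C0; rewrite inE => /andP [C0T wC0].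
          have /meetsP [y yB0 yC0] := cross B0 C0 u0 w B0T C0T u0A wA u0B wC0 nuw.
          exists y => //; rewrite !inE yB0 andbT; apply/negP => /eqP yu0.
          by move/eqP: nuw; apply; apply: (uv C0) => //; rewrite -yu0.
        apply: (@leq_trans (\sum_(y in B0 :\ u0) 1)).
          apply: leq_sum => y; rewrite !inE => /andP [nyu yB0].
          apply/card_le1_eqP => C1 C2; rewrite !inE.
          move=> /andP [/andP [C1T wC1] yC1] /andP [/andP [C2T wC2] yC2].
          case: (eqVneq C1 C2) => // nC.
          have /andP [C1F _] := C1T; have /andP [C2F _] := C2T.
          have ewy := lin2 C1 C2 w y C1F C2F nC wC1 yC1 wC2 yC2.
          by exfalso; move/eqP: nuw; apply; apply: (uv B0) => //; rewrite ewy.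
        rewrite sum1_card; have := cardsD1 u0 B0.
        have [B0F _ _ _] := tF B0 B0T.
        by rewrite u0B (u3' B0 B0F) add1n => /succn_inj <-.
      apply: (leq_trans (@cover_count _ _ T' A (fun (C0 : {set V}) (w : V) => w \in C0) _)).
        move=> C0 C0T; have [_ _ /meetsP [w wA wC] _] := tF C0 C0T; by exists w.
      apply: (@leq_trans (\sum_(w in A) 2)); first by apply: leq_sum => w wA; apply: Pw.
      by rewrite sum_nat_const (u3' A AF'); apply: six_le.
    - move=> nex.
      case: (set_0Vmem T') => [->|[B0 B0T]]; first by rewrite cards0.
      have [_ _ /meetsP [x0 x0A x0B] _] := tF B0 B0T.
      apply: (@leq_trans #|star F x0 :\ A|).
        apply: subset_leq_card; apply/subsetP => C CT.
        have [CF nCA /meetsP [w wA wC] _] := tF C CT.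
        have ew : w = x0.
          apply/eqP; apply/negPn/negP => nw; move/negP: nex; apply.
          apply/exists_inP; exists B0 => //; apply/exists_inP; exists C => //.
          apply/exists_inP; exists x0 => //; apply/exists_inP; exists w => //.
          by rewrite x0B wC eq_sym nw.
        by rewrite !inE nCA CF -ew wC.
      have := cardsD1 A (star F x0); rewrite inE AF' x0A /= => h.
      have := deg x0; rewrite h add1n => hd.
      exact: (leq_trans (ltnW hd) (leq_addr 1 Dl)).
  have ha2 := leq_add ha hb; rewrite -(leq_add2r 2); apply: (leq_trans _ (_ : 3 * Dl + (Dl + 2) <= 4 * Dl + 2)); last lia.
  by rewrite addnAC.
have key : 2 * #|F| <= \sum_(B in F) \sum_(A in M)
    (~~[disjoint A & B] + (~~[disjoint A & B] && (m B == 1))).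
  rewrite -sum1_card big_distrr /=; apply: leq_sum => B BF.
  rewrite muln1 big_split /= -card_setP -/(m B).
  have := cover B BF.
  case: (m B == 1) /eqP => h.
    under eq_bigr do rewrite andbT.
    by rewrite -card_setP -/(m B) h.
  under eq_bigr do rewrite andbF.
  rewrite big1 //; lia.
rewrite exchange_big /= in key.
have h2 : \sum_(A in M) \sum_(B in F)
    (~~[disjoint A & B] + (~~[disjoint A & B] && (m B == 1))) <= \sum_(A in M) 4 * Dl.
  by apply: leq_sum => A AM; exact: perA.
have := leq_trans key h2.
rewrite sum_nat_const. move=> h; rewrite -(leq_pmul2l (isT : 0 < 2)); apply: (leq_trans h); rewrite mulnC !mulnA. by rewrite nuM.
Qed.
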